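(* If $\mathcal{Q}\subseteq 2^E$ ($E$ finite) is weakly Rayleigh, then all maximal elements of $\mathcal{Q}$ (under inclusion) have the same cardinality $r$, and all minimal elements of $\mathcal{Q}$ have the same cardinality $s$.
   Context: For $\omega:2^E\to[0,\infty)$ not identically zero, $Z(\omega;\mathbf{y})=\sum_S\omega(S)\prod_{e\in S}y_e$; with subscripts denoting partial derivatives, $Z$ is Rayleigh if $Z_eZ_f-Z_{ef}Z\ge0$ for all distinct $e,f$ and all positive $\mathbf{y}$. $\mathcal{Q}$ is weakly Rayleigh if some $\omega\ge0$ with $\{S:\omega(S)>0\}=\mathcal{Q}$ has $Z(\omega;\mathbf{y})$ Rayleigh. *)

(* Defs.v *)
From mathcomp Require Import all_boot all_order all_algebra.
From mathcomp Require Import reals.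
Set Implicit Arguments. Unset Strict Implicit. Unset Printing Implicit Defensive.
Import Order.TTheory GRing.Theory Num.Theory.
Local Open Scope ring_scope.

Section Rayleigh.
Variables (R : realType) (E : finType).

(* Partial derivative of the multiaffine generating polynomial
   Z(w;y) = \sum_S w(S) \prod_{e in S} y_e  with respect to all variables
   in A (A = set0 gives Z itself): since Z is multiaffine,
   d^A Z (y) = \sum_{S \supseteq A} w(S) \prod_{e in S \ A} y_e. *)
Definition Zder (w : {set E} -> R) (A : {set E}) (y : E -> R) : R :=
  \sum_(S : {set E} | A \subset S) w S * \prod_(e in S :\: A) y e.

Definition Z (w : {set E} -> R) (y : E -> R) : R := Zder w set0 y.

Definition Rayleigh (w : {set E} -> R) : Prop :=
  forall (e f : E), e != f -> forall y : E -> R, (forall g, 0 < y g) ->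
    0 <= Zder w [set e] y * Zder w [set f] y - Zder w [set e; f] y * Z w y.

Definition weakly_Rayleigh (Q : {set {set E}}) : Prop :=
  exists w : {set E} -> R,
    (forall S, 0 <= w S) /\ (forall S, (0 < w S) <-> (S \in Q)) /\
    (exists S, w S != 0) /\ Rayleigh w.

Definition maximal_in (Q : {set {set E}}) (S : {set E}) : Prop :=
  S \in Q /\ forall T, T \in Q -> S \subset T -> T = S.
Definition minimal_in (Q : {set {set E}}) (S : {set E}) : Prop :=
  S \in Q /\ forall T, T \in Q -> T \subset S -> T = S.
End Rayleigh.

(* Main.v *)
Require Import Defs.
From mathcomp Require Import all_boot all_order all_algebra.
From mathcomp Require Import reals.
From mathcomp Require Import ring lra zify.
Set Implicit Arguments. Unset Strict Implicit. Unset Printing Implicit Defensive.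
Import Order.TTheory GRing.Theory Num.Theory.
Local Open Scope ring_scope.

Section Key.
Variables (R : realType) (E : finType).
Implicit Types (w : {set E} -> R) (y : E -> R).

Lemma Zder1 w e y : y e * Zder w [set e] y =
  \sum_(A : {set E} | e \in A) w A * \prod_(g in A) y g.
Proof.
rewrite /Zder mulr_sumr; apply: eq_big => [A|A]; first by rewrite sub1set.
rewrite sub1set => eA; by rewrite (big_setD1 _ eA) /= mulrCA.
Qed.

Lemma Zder2 w e f y : e != f -> y e * y f * Zder w [set e; f] y =
  \sum_(A : {set E} | (e \in A) && (f \in A)) w A * \prod_(g in A) y g.
Proof.
move=> ef; rewrite /Zder mulr_sumr; apply: eq_big => [A|A].
  by rewrite subUset !sub1set.
rewrite subUset !sub1set => /andP[eA fA].
have fA' : f \in A :\ e by rewrite !inE eq_sym ef.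
rewrite (big_setD1 _ eA) /= (big_setD1 _ fA') /= setDDl.
rewrite [w A * _]mulrC !mulrA.
by ring.
Qed.

Lemma Z0 w y : Z w y = \sum_(A : {set E}) w A * \prod_(g in A) y g.
Proof.
rewrite /Z /Zder; apply: eq_big => [A|A _]; first by rewrite sub0set.
by rewrite setD0.
Qed.

Lemma prodz (t : R) (c : E -> int) (A : {set E}) : 0 < t ->
  \prod_(g in A) t ^ (c g) = t ^ (\sum_(g in A) c g).
Proof.
move=> t0; have ut : t \is a GRing.unit by rewrite unitfE gt_eqF.
elim/big_rec2: _ => [|i x1 x2 _ ->]; first by rewrite expr0z.
by rewrite exprzDr.
Qed.

Lemma key w (c : E -> int) X Y e f (m : int) :
 (forall S, 0 <= w S) -> Rayleigh w -> 0 < w X -> 0 < w Y -> e != f ->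
 e \in X -> f \in X -> e \notin Y -> f \notin Y ->
 \sum_(g in X) c g = m -> \sum_(g in Y) c g = m ->
 (forall A, 0 < w A -> A != X -> A != Y -> \sum_(g in A) c g < m) -> False.
Proof.
move=> w0 Ray wX wY ef eX fX eY fY cX cY cA.
have XY : Y != X by apply: contraNneq eY => ->.
set N := \sum_(A : {set E}) w A.
have N0 : 0 <= N by apply: sumr_ge0.
set a := w X; set b := w Y.
have ab0 : 0 < a * b by apply: mulr_gt0.
set t := 1 + (2 * a * N + N ^+ 2) / (a * b).
have K0 : 0 <= 2 * a * N + N ^+ 2.
  by apply: addr_ge0; [apply: mulr_ge0; [apply: mulr_ge0; [|apply: ltW]|]|apply: exprn_ge0].
have t1 : 1 <= t by rewrite /t lerDl; apply: divr_ge0 => //; apply: ltW.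
have t0 : 0 < t by apply: lt_le_trans t1.
have keyt : 2 * a * N + N ^+ 2 < a * b * t.
  rewrite /t mulrDr mulr1 [a * b * (_ / _)]mulrC divfK ?gt_eqF //; lra.
pose y := fun g => t ^ (c g).
have y0 g : 0 < y g by apply: exprz_gt0.
have ut : t \is a GRing.unit by rewrite unitfE gt_eqF.
set u := t ^ (m - 1).
have u0 : 0 < u by apply: exprz_gt0.
have tm : t ^ m = t * u.
  by rewrite /u -[X in _ = X * _]expr1z -exprzDr // addrC subrK.
have PA (A : {set E}) : \prod_(g in A) y g = t ^ (\sum_(g in A) c g) by apply: (prodz c A t0).
have bnd (A : {set E}) : 0 < w A -> A != X -> A != Y -> \prod_(g in A) y g <= u.
  move=> wA AX AY; rewrite PA /u; apply: ler_weXz2l => //.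
  by rewrite lerBrDr lezD1; apply: cA.
have rem (P : pred {set E}) : (forall A, P A -> (A != X) && (A != Y)) ->
    0 <= \sum_(A | P A) w A * \prod_(g in A) y g <= N * u.
  move=> HP; apply/andP; split.
    by apply: sumr_ge0 => A _; apply: mulr_ge0 => //; apply: prodr_ge0 => g _; apply: ltW.
  apply: (@le_trans _ _ (\sum_(A | P A) w A * u)).
    apply: ler_sum => A PA'; have /orP[/eqP<-|wA] : (0 == w A) || (0 < w A) by rewrite -le_eqVlt.
      by rewrite !mul0r.
    by move/andP: (HP A PA') => [AX AY]; apply: ler_wpM2l => //; apply: bnd.
  rewrite /N mulr_suml [X in _ <= X](bigID P) /= lerDl.
  by apply: sumr_ge0 => A _; apply: mulr_ge0 => //; apply: ltW.
have PX : \prod_(g in X) y g = t * u by rewrite PA cX tm.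
have PY : \prod_(g in Y) y g = t * u by rewrite PA cY tm.
have se : \sum_(A : {set E} | e \in A) w A * \prod_(g in A) y g =
   a * (t * u) + \sum_(A : {set E} | (e \in A) && (A != X)) w A * \prod_(g in A) y g.
  by rewrite (bigD1 X) //= PX.
have sf : \sum_(A : {set E} | f \in A) w A * \prod_(g in A) y g =
   a * (t * u) + \sum_(A : {set E} | (f \in A) && (A != X)) w A * \prod_(g in A) y g.
  by rewrite (bigD1 X) //= PX.
have sef : \sum_(A : {set E} | (e \in A) && (f \in A)) w A * \prod_(g in A) y g =
   a * (t * u) + \sum_(A : {set E} | ((e \in A) && (f \in A)) && (A != X)) w A * \prod_(g in A) y g.
  by rewrite (bigD1 X) ?eX ?fX //= PX.
have sall : \sum_(A : {set E}) w A * \prod_(g in A) y g =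
   a * (t * u) + (b * (t * u) + \sum_(A : {set E} | (A != X) && (A != Y)) w A * \prod_(g in A) y g).
  rewrite (bigD1 X) //= PX; congr (_ + _).
  by rewrite (bigD1 Y) //= PY.
have := Ray e f ef y y0.
move=> /(mulr_ge0 (ltW (mulr_gt0 (y0 e) (y0 f)))).
set Ze := Zder w [set e] y; set Zf := Zder w [set f] y.
set Zef := Zder w [set e; f] y; set Zz := Z w y.
have -> : y e * y f * (Ze * Zf - Zef * Zz) =
    (y e * Ze) * (y f * Zf) - (y e * y f * Zef) * Zz by ring.
rewrite /Ze /Zf /Zef /Zz Zder1 Zder1 Zder2 // Z0 se sf sef sall.
have /andP[r10 r1N] := rem (fun A => (e \in A) && (A != X))
  ltac:(by move=> A /andP[eA ->]; apply: contraNneq eY => <-).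
have /andP[r20 r2N] := rem (fun A => (f \in A) && (A != X))
  ltac:(by move=> A /andP[fA ->]; apply: contraNneq fY => <-).
have /andP[r30 r3N] := rem (fun A => ((e \in A) && (f \in A)) && (A != X))
  ltac:(by move=> A /andP[/andP[eA _] ->]; apply: contraNneq eY => <-).
have /andP[r40 r4N] := rem (fun A => (A != X) && (A != Y)) ltac:(by []).
move: r10 r1N r20 r2N r30 r3N r40 r4N.
set r1 := \sum_(A : {set E} | (e \in A) && (A != X)) _.
set r2 := \sum_(A : {set E} | (f \in A) && (A != X)) _.
set r3 := \sum_(A : {set E} | ((e \in A) && (f \in A)) && (A != X)) _.
set r4 := \sum_(A : {set E} | (A != X) && (A != Y)) _.
move=> r10 r1N r20 r2N r30 r3N r40 r4N H.
set al := a * (t * u) in H; set be := b * (t * u) in H.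
have al0 : 0 <= al by apply: ltW; apply: mulr_gt0 => //; apply: mulr_gt0.
have be0 : 0 <= be by apply: ltW; apply: mulr_gt0 => //; apply: mulr_gt0.
have h1 : al * (al + be) <= (al + r3) * (al + (be + r4)).
  have : 0 <= al * r4 + r3 * (al + (be + r4)).
    by apply: addr_ge0; apply: mulr_ge0 => //; apply: addr_ge0 => //; apply: addr_ge0.
  move=> h; have -> : (al + r3) * (al + (be + r4)) = al * (al + be) + (al * r4 + r3 * (al + (be + r4))) by ring.
  by rewrite lerDl.
have h2 : al * r1 <= al * (N * u) by apply: ler_wpM2l.
have h3 : al * r2 <= al * (N * u) by apply: ler_wpM2l.
have h4 : r1 * r2 <= (N * u) * (N * u) by apply: ler_pM.
have h5 : 0 < u ^+ 2 * (a * b * t ^+ 2 - 2 * a * N * t - N ^+ 2).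
  apply: mulr_gt0; first by apply: exprn_gt0.
  rewrite subr_gt0 ltrBrDr.
  have : (2 * a * N + N ^+ 2) * t < a * b * t * t by rewrite ltr_pM2r.
  have : N ^+ 2 <= N ^+ 2 * t by rewrite ler_peMr // exprn_ge0.
  move=> ha hb; rewrite expr2 mulrA; lra.
have E1 : (al + r1) * (al + r2) = al * al + al * r1 + al * r2 + r1 * r2 by ring.
have E2 : al * (N * u) + al * (N * u) + N * u * (N * u) - al * be =
   - (u ^+ 2 * (a * b * t ^+ 2 - 2 * a * N * t - N ^+ 2)).
  by rewrite /al /be; ring.
lra.
Qed.

Section Comb.
Variables (S T A : {set E}) (vI vS vT vO : int).
Definition cw (g : E) : int :=
  if g \in S then (if g \in T then vI else vS) else (if g \in T then vT else vO).

Lemma sumc (B : {set E}) (v : int) : (forall g, g \in B -> cw g = v) ->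
  \sum_(g in B) cw g = v * #|B|%:Z.
Proof. by move=> h; rewrite (eq_bigr (fun=> v)) // sumr_const -mulr_natr natz. Qed.

Lemma decomp : \sum_(g in A) cw g - \sum_(g in S) cw g =
   vT * #|(A:\:S):&:T|%:Z + vO * #|(A:\:S):\:T|%:Z
   - vI * #|(S:\:A):&:T|%:Z - vS * #|(S:\:A):\:T|%:Z.
Proof.
rewrite (big_setID S) [X in _ - X](big_setID A) [S :&: A]setIC /=.
rewrite [\sum_(g in A :\: S) _](big_setID T) [\sum_(g in S :\: A) _](big_setID T) /=.
rewrite (@sumc ((A:\:S):&:T) vT); last by move=> g; rewrite /cw !inE => /andP[/andP[/negbTE -> _] ->].
rewrite (@sumc ((A:\:S):\:T) vO); last by move=> g; rewrite /cw !inE => /andP[/negbTE -> /andP[/negbTE -> _]].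
rewrite (@sumc ((S:\:A):&:T) vI); last by move=> g; rewrite /cw !inE => /andP[/andP[_ ->] ->].
rewrite (@sumc ((S:\:A):\:T) vS); last by move=> g; rewrite /cw !inE => /andP[/negbTE -> /andP[_ ->]].
ring.
Qed.
End Comb.

Lemma eq_from_cards (S T A : {set E}) :
  #|(S:\:A):&:T| = 0%N -> #|(A:\:S):\:T| = 0%N ->
  #|(S:\:A):\:T| = #|S:\:T| -> #|(A:\:S):&:T| = #|T:\:S| -> A = T.
Proof.
move=> /eqP; rewrite cards_eq0 => /eqP F1 /eqP; rewrite cards_eq0 => /eqP F2 c3 c4.
have F3 : (S:\:A):\:T = S:\:T.
  apply/eqP; rewrite eqEcard c3 leqnn andbT; apply/subsetP => g; rewrite !inE.
  by case: (g \in S); case: (g \in T); case: (g \in A).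
have F4 : (A:\:S):&:T = T:\:S.
  apply/eqP; rewrite eqEcard c4 leqnn andbT; apply/subsetP => g; rewrite !inE.
  by case: (g \in S); case: (g \in T); case: (g \in A).
apply/setP => g.
have := congr1 (fun X : {set E} => g \in X) F1; have := congr1 (fun X : {set E} => g \in X) F2.
have := congr1 (fun X : {set E} => g \in X) F3; have := congr1 (fun X : {set E} => g \in X) F4.
rewrite /= !inE.
by case: (g \in S); case: (g \in T); case: (g \in A).
Qed.

Lemma eq_from_cards2 (S A : {set E}) :
  #|S:\:A| = 0%N -> #|A:\:S| = 0%N -> A = S.
Proof.
move=> /eqP; rewrite cards_eq0 setD_eq0 => h1 /eqP; rewrite cards_eq0 setD_eq0 => h2.
by apply/eqP; rewrite eqEsubset h1 h2.
Qed.

Lemma setTS1 (S T : {set E}) : (T:\:S):&:T = T:\:S.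
Proof. by apply/setP => g; rewrite !inE; case: (g \in S); case: (g \in T). Qed.
Lemma setTS2 (S T : {set E}) : (T:\:S):\:T = set0.
Proof. by apply/setP => g; rewrite !inE; case: (g \in S); case: (g \in T). Qed.
Lemma setTS3 (S T : {set E}) : (S:\:T):&:T = set0.
Proof. by apply/setP => g; rewrite !inE; case: (g \in S); case: (g \in T). Qed.
Lemma setTS4 (S T : {set E}) : (S:\:T):\:T = S:\:T.
Proof. by apply/setP => g; rewrite !inE; case: (g \in S); case: (g \in T). Qed.


Lemma max_le (w : {set E} -> R) (Q : {set {set E}}) :
  (forall S, 0 <= w S) -> (forall S, (0 < w S) <-> (S \in Q)) -> Rayleigh w ->
  forall S T0, maximal_in Q S -> T0 \in Q -> (#|T0| <= #|S|)%N.
Proof.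
move=> w0 supp Ray S T0 [SQ Smax] T0Q.
rewrite leqNgt; apply/negP => ST0.
pose P n := [exists T : {set E}, [&& T \in Q, (#|S| < #|T|)%N & #|S :\: T| + #|T :\: S| == n]].
have exP : exists n, P n.
  by exists (#|S :\: T0| + #|T0 :\: S|)%N; apply/existsP; exists T0; rewrite T0Q ST0 eqxx.
case: (ex_minnP exP) => n /existsP[T /and3P[TQ ST /eqP nE]] nmin.
have minT (A : {set E}) : A \in Q -> (#|S| < #|A|)%N -> (n <= #|S :\: A| + #|A :\: S|)%N.
  by move=> AQ SA; apply: nmin; apply/existsP; exists A; rewrite AQ SA eqxx.
set p := #|S :\: T|; set q := #|T :\: S|.
have cS : (#|S :&: T| + p)%N = #|S| := cardsID T S.
have cT : (#|S :&: T| + q)%N = #|T| by rewrite setIC; apply: cardsID.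
have p1 : (0 < p)%N.
  rewrite lt0n; apply/negP => /eqP/eqP; rewrite cards_eq0 setD_eq0 => sST.
  by move: ST; rewrite (Smax T TQ sST) ltnn.
have q2 : (1 < q)%N by lia.
have [e [f [eT fT ef]]] := card_gt1P q2.
move: eT fT; rewrite !inE => /andP[eS eT] /andP[fS fT].
pose K : int := (p * q + 1)%:Z.
pose c := cw S T K q%:Z p%:Z (- K).
apply: (@key w c T S e f (\sum_(g in S) c g) w0 Ray) => //.
- by apply/supp.
- by apply/supp.
- apply/eqP; rewrite -subr_eq0 /c decomp setTS1 setTS2 setTS3 setTS4 cards0 -/p -/q.
  apply/eqP; rewrite /K; lia.
move=> A wA AT AS; have AQ := (supp A).1 wA.
rewrite -subr_lt0 /c decomp.
set x1 := #|(S:\:A):&:T|; set x2 := #|(S:\:A):\:T|.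
set j := #|(A:\:S):&:T|; set o := #|(A:\:S):\:T|.
have h1 : (x1 + x2)%N = #|S:\:A| := cardsID T (S:\:A).
have h2 : (j + o)%N = #|A:\:S| := cardsID T (A:\:S).
have h3 : (#|A :&: S| + #|A:\:S|)%N = #|A| := cardsID S A.
have h4 : (#|S :&: A| + #|S:\:A|)%N = #|S| := cardsID A S.
have h5 : #|A :&: S| = #|S :&: A| by rewrite setIC.
have hj : (j <= q)%N.
  by apply: subset_leq_card; apply/subsetP => g; rewrite !inE => /andP[/andP[-> _] ->].
have hx2 : (x2 <= p)%N.
  by apply: subset_leq_card; apply/subsetP => g; rewrite !inE => /andP[-> /andP[_ ->]].
have hpj : (p * j <= p * q)%N by apply: leq_mul.
rewrite ltNge; apply/negP => H.
have Hn : (K * (o + x1) + q * x2 <= p * j)%R by clear -H; lra.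
have HnN : ((p * q + 1) * (o + x1) + q * x2 <= p * j)%N by clear -Hn; rewrite /K in Hn; lia.
have ox : (o + x1 = 0)%N by clear -HnN hpj; nia.
have pq : (p < q)%N by clear -cS cT ST; lia.
case: (ltnP #|S| #|A|) => SA.
  have := minT A AQ SA; rewrite -h1 -h2 -nE -/p -/q => hm.
  have ex2 : x2 = p by clear -hm hx2 hj ox; lia.
  have ej : j = q by clear -hm hx2 hj ox; lia.
  by move/eqP: AT; apply; apply: (eq_from_cards (S:=S)); clear -ox ex2 ej; rewrite -/x1 -/x2 -/j -/o; lia.
have hjx : (j <= x2)%N by clear -h1 h2 h3 h4 h5 SA ox; lia.
have qj : (q * j <= q * x2)%N by apply: leq_mul.
have j0 : j = 0%N by clear -HnN ox qj pq; nia.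
have x20 : x2 = 0%N by clear -HnN ox j0 pq; nia.
move/eqP: AS; apply; apply: eq_from_cards2; clear -h1 h2 ox j0 x20; lia.
Qed.

Lemma min_le (w : {set E} -> R) (Q : {set {set E}}) :
  (forall S, 0 <= w S) -> (forall S, (0 < w S) <-> (S \in Q)) -> Rayleigh w ->
  forall S T0, minimal_in Q S -> T0 \in Q -> (#|S| <= #|T0|)%N.
Proof.
move=> w0 supp Ray S T0 [SQ Smin] T0Q.
rewrite leqNgt; apply/negP => ST0.
pose P n := [exists T : {set E}, [&& T \in Q, (#|T| < #|S|)%N & #|S :\: T| + #|T :\: S| == n]].
have exP : exists n, P n.
  by exists (#|S :\: T0| + #|T0 :\: S|)%N; apply/existsP; exists T0; rewrite T0Q ST0 eqxx.
case: (ex_minnP exP) => n /existsP[T /and3P[TQ ST /eqP nE]] nmin.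
have minT (A : {set E}) : A \in Q -> (#|A| < #|S|)%N -> (n <= #|S :\: A| + #|A :\: S|)%N.
  by move=> AQ SA; apply: nmin; apply/existsP; exists A; rewrite AQ SA eqxx.
set p := #|S :\: T|; set q := #|T :\: S|.
have cS : (#|S :&: T| + p)%N = #|S| := cardsID T S.
have cT : (#|S :&: T| + q)%N = #|T| by rewrite setIC; apply: cardsID.
have q1 : (0 < q)%N.
  rewrite lt0n; apply/negP => /eqP/eqP; rewrite cards_eq0 setD_eq0 => sTS.
  by move: ST; rewrite (Smin T TQ sTS) ltnn.
have p2 : (1 < p)%N by lia.
have [e [f [eS fS ef]]] := card_gt1P p2.
move: eS fS; rewrite !inE => /andP[eT eS] /andP[fT fS].
pose K : int := (p * q + 1)%:Z.
pose c := cw S T K (- q%:Z) (- p%:Z) (- K).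
apply: (@key w c S T e f (\sum_(g in S) c g) w0 Ray) => //.
- by apply/supp.
- by apply/supp.
- apply/eqP; rewrite -subr_eq0 /c decomp setTS1 setTS2 setTS3 setTS4 cards0 -/p -/q.
  apply/eqP; rewrite /K; lia.
move=> A wA AS AT; have AQ := (supp A).1 wA.
rewrite -subr_lt0 /c decomp.
set x1 := #|(S:\:A):&:T|; set x2 := #|(S:\:A):\:T|.
set j := #|(A:\:S):&:T|; set o := #|(A:\:S):\:T|.
have h1 : (x1 + x2)%N = #|S:\:A| := cardsID T (S:\:A).
have h2 : (j + o)%N = #|A:\:S| := cardsID T (A:\:S).
have h3 : (#|A :&: S| + #|A:\:S|)%N = #|A| := cardsID S A.
have h4 : (#|S :&: A| + #|S:\:A|)%N = #|S| := cardsID A S.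
have h5 : #|A :&: S| = #|S :&: A| by rewrite setIC.
have hj : (j <= q)%N.
  by apply: subset_leq_card; apply/subsetP => g; rewrite !inE => /andP[/andP[-> _] ->].
have hx2 : (x2 <= p)%N.
  by apply: subset_leq_card; apply/subsetP => g; rewrite !inE => /andP[-> /andP[_ ->]].
have hqx : (q * x2 <= q * p)%N by apply: leq_mul.
rewrite ltNge; apply/negP => H.
have Hn : (K * (o + x1) + p * j <= q * x2)%R by clear -H; lra.
have HnN : ((p * q + 1) * (o + x1) + p * j <= q * x2)%N by clear -Hn; rewrite /K in Hn; lia.
have ox : (o + x1 = 0)%N by clear -HnN hqx; nia.
have pq : (q < p)%N by clear -cS cT ST; lia.
case: (ltnP #|A| #|S|) => SA.
  have := minT A AQ SA; rewrite -h1 -h2 -nE -/p -/q => hm.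
  have ex2 : x2 = p by clear -hm hx2 hj ox; lia.
  have ej : j = q by clear -hm hx2 hj ox; lia.
  by move/eqP: AT; apply; apply: (eq_from_cards (S:=S)); clear -ox ex2 ej; rewrite -/x1 -/x2 -/j -/o; lia.
have hjx : (x2 <= j)%N by clear -h1 h2 h3 h4 h5 SA ox; lia.
have qj : (p * x2 <= p * j)%N by apply: leq_mul.
have x20 : x2 = 0%N by clear -HnN ox qj pq; nia.
have j0 : j = 0%N by clear -HnN ox x20 pq; nia.
move/eqP: AS; apply; apply: eq_from_cards2; clear -h1 h2 ox j0 x20; lia.
Qed.

End Key.

From Stdlib Require Import Classical_Prop.

Theorem corollary4p8 (R : realType) (E : finType) (Q : {set {set E}}) :
  weakly_Rayleigh R Q ->
  (exists r : nat, forall S, maximal_in Q S -> #|S| = r) /\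
  (exists s : nat, forall S, minimal_in Q S -> #|S| = s).
Proof.
move=> [w [w0 [supp [_ Ray]]]]; split.
  have [[S0 H0]|nS] := classic (exists S, maximal_in Q S); last first.
    by exists 0%N => S HS; exfalso; apply: nS; exists S.
  exists #|S0| => S HS; apply/eqP; rewrite eqn_leq.
  by rewrite (max_le w0 supp Ray H0 HS.1) (max_le w0 supp Ray HS H0.1).
have [[S0 H0]|nS] := classic (exists S, minimal_in Q S); last first.
  by exists 0%N => S HS; exfalso; apply: nS; exists S.
exists #|S0| => S HS; apply/eqP; rewrite eqn_leq.
by rewrite (min_le w0 supp Ray HS H0.1) (min_le w0 supp Ray H0 HS.1).
Qed.
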